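(* Let $n$ be a positive integer and $s\ge 64n$. There exists a subset of $\{0,1\}^s$ of size $2^n$ such that $\sum_{i=1}^s a_i(1-b_i)\ge s/8$ for any two different elements $a=(a_1,\dots,a_s)$ and $b=(b_1,\dots,b_s)$ of the subset. *)

(* Defs.v *)
From mathcomp Require Import all_boot.
Set Implicit Arguments. Unset Strict Implicit. Unset Printing Implicit Defensive.

Definition asym_dist (s : nat) (a b : {ffun 'I_s -> bool}) : nat :=
  \sum_(i < s) (nat_of_bool (a i) * (1 - nat_of_bool (b i))).

(* Main.v *)
Require Import Defs.
From mathcomp Require Import all_boot zify.
Set Implicit Arguments. Unset Strict Implicit. Unset Printing Implicit Defensive.

Definition xn m (x : {ffun 'I_m -> bool}) (j : nat) : bool :=
  if insub j is Some k then x k else false.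
Definition embn m (x : {ffun 'I_m -> bool}) (i : nat) : bool :=
  if i < m then xn x i else if i < m + m then ~~ xn x (i - m) else false.
Definition emb m s (x : {ffun 'I_m -> bool}) : {ffun 'I_s -> bool} :=
  [ffun i : 'I_s => embn x i].
Definition ham m (x y : {ffun 'I_m -> bool}) : nat :=
  \sum_(k < m) nat_of_bool (x k != y k).

Lemma xnE m (x : {ffun 'I_m -> bool}) (k : 'I_m) : xn x k = x k.
Proof. by rewrite /xn valK. Qed.

Lemma asym_emb m s (x y : {ffun 'I_m -> bool}) : m + m <= s ->
  asym_dist (emb s x) (emb s y) = ham x y.
Proof.
move=> hs; rewrite /asym_dist.
under eq_bigr do rewrite !ffunE.
rewrite -(big_mkord xpredT (fun i => nat_of_bool (embn x i) * (1 - nat_of_bool (embn y i)))).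
rewrite (@big_cat_nat _ _ _ (m + m)) //= ?leq_addr //.
rewrite (@big_cat_nat _ _ _ m) //= ?leq_addr //.
have Z : \sum_(m+m <= i < s) embn x i * (1 - embn y i) = 0.
  rewrite big_nat_cond big1 // => i /andP[/andP[hi _] _].
  by rewrite /embn ltnNge (leq_trans (leq_addr m m) hi) /= ltnNge hi.
rewrite Z addn0.
have := big_addn 0 (m+m) m xpredT (fun i => nat_of_bool (embn x i) * (1 - nat_of_bool (embn y i))).
rewrite add0n addnK => ->.
rewrite (@eq_big_nat _ _ _ 0 m _ (fun i => nat_of_bool (xn x i) * (1 - nat_of_bool (xn y i)))); last first.
  by move=> i /andP[_ hi]; rewrite /embn hi.
rewrite (@eq_big_nat _ _ _ 0 m (fun i => nat_of_bool (embn x (i+m)) * (1 - nat_of_bool (embn y (i+m)))) (fun i => nat_of_bool (~~ xn x i) * (1 - nat_of_bool (~~ xn y i)))); last first.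
  move=> i /andP[_ hi]. rewrite /embn ltnNge leq_addl /= ltn_add2r hi addnK //.
rewrite !big_mkord -big_split /=; apply: eq_bigr => k _.
by rewrite !xnE; case: (x k); case: (y k).
Qed.

Lemma emb_inj m s (x y : {ffun 'I_m -> bool}) : m <= s -> emb s x = emb s y -> x = y.
Proof.
move=> ms e; apply/ffunP => k.
have ks : k < s by apply: leq_trans ms.
have := congr1 (fun f : {ffun 'I_s -> bool} => f (Ordinal ks)) e; rewrite !ffunE /embn /= ltn_ord.
by rewrite -!(xnE _ k).
Qed.

Definition agree m (x y : {ffun 'I_m -> bool}) : nat :=
  \sum_(k < m) nat_of_bool (x k == y k).

Lemma ham_agree m (x y : {ffun 'I_m -> bool}) : ham x y + agree x y = m.
Proof.
rewrite /ham /agree -big_split /=.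
rewrite (eq_bigr (fun _ => 1)); last by move=> k _; case: (x k == y k).
by rewrite sum_nat_const card_ord muln1.
Qed.

Lemma sum_agree m (x : {ffun 'I_m -> bool}) : \sum_y 2 ^ agree x y = 3 ^ m.
Proof.
under eq_bigr do rewrite /agree expn_sum.
rewrite -(bigA_distr_bigA (fun k b => 2 ^ nat_of_bool (x k == b))) /=.
rewrite (eq_bigr (fun _ => 3)); last by move=> k _; rewrite big_bool; case: (x k).
by rewrite prod_nat_const card_ord.
Qed.
Lemma greedy (T : finType) (R : rel T) (N : nat) :
  0 < #|T| ->
  (forall x y, R x y -> R y x) -> (forall x, ~~ R x x) ->
  (forall x, #|[set y | ~~ R x y]| * N <= #|T|) ->
  exists S : {set T}, #|S| = N /\ (forall a b, a \in S -> b \in S -> a != b -> R a b).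
Proof.
move=> T0 Rs Ri Hb.
suff H : forall k, k <= N -> exists S U : {set T}, [/\ #|S| = k,
  (forall a b, a \in S -> b \in S -> a != b -> R a b),
  (forall x y, x \in S -> ~~ R x y -> y \in U) & #|U| * N <= k * #|T|].
  by have [S [U [? ? _ _]]] := H N (leqnn N); exists S.
elim=> [_|k IH kN].
  exists set0, set0; split => //; first by rewrite cards0.
  - by move=> a b; rewrite inE.
  - by move=> x y; rewrite inE.
  - by rewrite cards0.
have [S [U [cS pS US cU]]] := IH (ltnW kN).
have UT : #|U| < #|T|.
  rewrite -(ltn_pmul2r (leq_ltn_trans (leq0n k) kN)).
  apply: (leq_ltn_trans cU); rewrite mulnC ltn_pmul2l //.
have : ~: U != set0.
  apply/negP => /eqP e.
  by move: UT; rewrite (cardsCs U) e cards0 subn0 ltnn.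
case/set0Pn => y; rewrite inE => yU.
have yS : y \notin S by apply/negP => yS; rewrite (US y y yS (Ri y)) in yU.
exists (y |: S), ([set z | ~~ R y z] :|: U); split.
- by rewrite cardsU1 yS cS.
- move=> a b /setU1P[->|aS] /setU1P[->|bS]; rewrite ?eqxx // => ab.
  + apply: Rs; apply/negPn/negP => H; by have := US b y bS H; rewrite (negbTE yU).
  + apply/negPn/negP => H; by have := US a y aS H; rewrite (negbTE yU).
  + exact: pS.
- move=> x z /setU1P[->|xS] Rxz; rewrite inE.
    by rewrite inE Rxz.
  by rewrite (US x z xS Rxz) orbT.
- apply: leq_trans (_ : (#|[set z | ~~ R y z]| + #|U|) * N <= _).
    by rewrite leq_mul2r leq_card_setU orbT.
  by rewrite mulnDl mulSn leq_add.
Qed.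

Lemma three32 : 3 ^ 32 <= 2 ^ 52.
Proof.
have -> : 32 = 5 * 6 + 2 by [].
rewrite expnD expnM.
apply: leq_trans (_ : (2 ^ 8) ^ 6 * 2 ^ 4 <= _).
  by apply: leq_mul; [rewrite leq_exp2r | ].
by rewrite -expnM -expnD leq_exp2l.
Qed.

Lemma bad_bound m s n (x : {ffun 'I_m -> bool}) : 0 < n -> s <= m + m + 1 -> 32 * n <= m ->
  #|[set y | ~~ (s <= 8 * ham x y)]| * 2 ^ n <= 2 ^ m.
Proof.
move=> n0 hs hn.
set B := [set y | _].
set d := m %/ 4.
have dm : d <= m by apply: leq_div.
have H1 : #|B| * 2 ^ (m - d) <= 3 ^ m.
  rewrite -(sum_agree x) -sum_nat_const.
  apply: leq_trans (_ : \sum_(y in B) 2 ^ agree x y <= _).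
    apply: leq_sum => y; rewrite inE -ltnNge => hy.
    apply: leq_pexp2l => //; have := ham_agree x y; rewrite /d; lia.
  by rewrite [X in _ <= X](bigID (mem B)) /= leq_addr.
have m0 : 0 < m by lia.
have H2 : 3 ^ m * 2 ^ n * 2 ^ d <= 2 ^ m * 2 ^ m.
  rewrite -(@leq_exp2r _ _ 32) // !expnMn -!expnM.
  have h3 : 3 ^ (m * 32) <= 2 ^ (m * 52).
    rewrite (mulnC m 32) (mulnC m 52) !expnM (leq_exp2r _ _ m0); exact: three32.
  apply: (@leq_trans (2^(m*52) * 2^(n*32) * 2^(d*32))).
    by rewrite leq_mul2r leq_mul2r h3 !orbT.
  rewrite -!expnD leq_exp2l //; rewrite /d; lia.
have P : 0 < 2 ^ (m - d) * 2 ^ d by rewrite muln_gt0 !expn_gt0.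
rewrite -(leq_pmul2r P).
apply: leq_trans (_ : 3 ^ m * 2 ^ n * 2 ^ d <= _); last first.
  by rewrite -expnD subnK.
rewrite mulnA -[#|B| * 2 ^ n * _]mulnA [2 ^ n * _]mulnC mulnA.
by rewrite !leq_mul2r H1 !orbT.
Qed.

Theorem lemma3 (n s : nat) (hn : 0 < n) (hs : 64 * n <= s) :
  exists S : {set {ffun 'I_s -> bool}},
    #|S| = 2 ^ n /\
    (forall a b, a \in S -> b \in S -> a != b -> s <= 8 * asym_dist a b).
Proof.
set m := s %/ 2.
have hm2 : m + m <= s by rewrite /m; lia.
have hm1 : s <= m + m + 1 by rewrite /m; lia.
have hm : 32 * n <= m by rewrite /m; lia.
have cT : #|{ffun 'I_m -> bool}| = 2 ^ m by rewrite card_ffun card_bool card_ord.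
have [S0 [cS0 pS0]] : exists S0 : {set {ffun 'I_m -> bool}}, #|S0| = 2 ^ n /\
    (forall a b, a \in S0 -> b \in S0 -> a != b -> s <= 8 * ham a b).
  apply: (@greedy _ (fun x y : {ffun 'I_m -> bool} => s <= 8 * ham x y) (2 ^ n)).
- by rewrite cT expn_gt0.
- by move=> x y /=; rewrite /ham; under eq_bigr do rewrite eq_sym.
- move=> x /=; rewrite /ham big1 ?muln0 -?ltnNge; first lia.
  by move=> k _; rewrite eqxx.
- by move=> x; rewrite cT; apply: bad_bound.
exists [set emb s x | x in S0]; split.
  rewrite card_in_imset ?cS0 //.
  by move=> x y _ _; apply: emb_inj; lia.
move=> a b /imsetP[x xS ->] /imsetP[y yS ->] ab.
rewrite asym_emb //; apply: pS0 => //.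
by apply: contraNneq ab => ->.
Qed.
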